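(* Let $n\ge 1$ and let $f$ be a real-valued function on the product states of $\mathcal{H}_n=\otimes^n\mathbb{C}^2$ such that there is a constant $c$ with $\sum_{i=1}^{2^n} f(u_i)=c$ for every unentangled orthonormal basis (UOB) $\{u_1,\dots,u_{2^n}\}$ of $\mathcal{H}_n$. Then for each subset $J\subset\Omega_n=\{1,\dots,n\}$ there exists a function $\phi_J$ on $F^{n-|J|}$ (with $F^0=\{\omega\}$ and $\phi_{\Omega_n}(\omega)=c$) such that for every $z\in F_n$, \[ \sum_{L\subset J} f(\sigma_L(z))=\phi_J(\tau_J(z)). \]
   Context: One-qubit states are points of $\mathbb{P}^1(\mathbb{C})$, identified with $\mathbb{C}\cup\{\infty\}$ via $(x,y)\mapsto x/y$. Let $\sigma:\mathbb{C}^2\to\mathbb{C}^2$, $\sigma(x,y)=(-\bar y,\bar x)$; it induces on $\mathbb{C}\cup\{\infty\}$ the map $\sigma z=-1/\bar z$, and $\sigma v$ is (up to phase) the unique state orthogonal to $v$; write $\hat a=\sigma a$. The fundamental domain is $F=\{z\in\mathbb{C}:|z|<1\}\cup\{z\in\mathbb{C}:|z|=1,\ \operatorname{Im}z>0\}\cup\{1\}$. A product (unentangled) state of $\mathcal{H}_n$ is $z_1\otimes\cdots\otimes z_n$ with each $z_i$ a one-qubit state; $F_n=F\otimes\cdots\otimes F$ is the set of product states with all $z_i\in F$, and $F^m$ denotes the direct product of $m$ copies of $F$. A UOB of $\mathcal{H}_n$ is an orthonormal basis consisting of product unit vectors. For $J\subset\Omega_n$, $\sigma_J=T_1\otimes\cdots\otimes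 T_n$ with $T_j=\sigma$ if $j\in J$ and $T_j=\mathbb{I}$ otherwise. For $z=z_1\otimes\cdots\otimes z_n\in F_n$ and $J\ne\Omega_n$ with $\Omega_n\setminus J=\{i_1<\dots<i_k\}$, set $\tau_J(z)=(z_{i_1},\dots,z_{i_k})\in F^{k}$; for $J=\Omega_n$, $\tau_J(z)=\omega$. *)

(* Defs.v *)
From mathcomp Require Import all_boot all_algebra.
From mathcomp Require Import reals complex.
Set Implicit Arguments. Unset Strict Implicit. Unset Printing Implicit Defensive.
Import GRing.Theory Num.Theory.
Local Open Scope ring_scope.
Local Open Scope complex_scope.

(* One-qubit states = points of P^1(C) = C ∪ {∞}; we use [option R[i]],
   [Some z] = the finite point z (vector (z,1)), [None] = ∞ (vector (1,0)). *)
Definition P1 (R : realType) := option R[i].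

Definition qvec (R : realType) (p : P1 R) : R[i] * R[i] :=
  match p with Some z => (z, 1) | None => (1, 0) end.

(* sigma(x,y) = (-conj y, conj x), i.e. sigma z = -1/conj z *)
Definition sig (R : realType) (p : P1 R) : P1 R :=
  match p with
  | Some z => if z == 0 then None else Some (- (conjc z)^-1)
  | None => Some 0
  end.

Definition pstate (R : realType) (n : nat) := n.-tuple (P1 R).

(* coordinates of the tensor product vector in C^(2^n) = functions on {0,1}^n *)
Definition tens (R : realType) (n : nat) (u : pstate R n)
    (b : {ffun 'I_n -> bool}) : R[i] :=
  \prod_(k < n) (if b k then (qvec (tnth u k)).2 else (qvec (tnth u k)).1).

Definition hinner (R : realType) (n : nat) (u v : pstate R n) : R[i] :=
  \sum_(b : {ffun 'I_n -> bool}) conjc (tens u b) * tens v b.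

(* A UOB of H_n: 2^n pairwise orthogonal product states (after normalizing each
   vector to unit length, these form an orthonormal family of 2^n vectors
   in the 2^n-dimensional space H_n, i.e. an orthonormal basis). *)
Definition UOB (R : realType) (n : nat) (u : 'I_(2 ^ n) -> pstate R n) : Prop :=
  forall i j : 'I_(2 ^ n), i != j -> hinner (u i) (u j) = 0.

Definition absq (R : realType) (z : R[i]) : R := (@complex.Re R z) ^+ 2 + (@complex.Im R z) ^+ 2.

Definition inF (R : realType) (z : R[i]) : bool :=
  [|| absq z < 1, (absq z == 1) && (0 < @complex.Im R z) | z == 1].

Definition sigmaJ (R : realType) (n : nat) (J : {set 'I_n}) (u : pstate R n)
  : pstate R n :=
  [tuple (if i \in J then sig (tnth u i) else tnth u i) | i < n].

Definition pst (R : realType) (n : nat) (z : n.-tuple R[i]) : pstate R n :=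
  map_tuple (@Some R[i]) z.

(* tau_J(z) = (z_{i_1},...,z_{i_k}) with Ω_n \ J = {i_1 < ... < i_k};
   the empty sequence plays the role of ω when J = Ω_n *)
Definition tauJ (R : realType) (n : nat) (J : {set 'I_n}) (z : n.-tuple R[i])
  : seq R[i] :=
  [seq tnth z i | i <- enum (~: J)].

(* Main.v *)
Require Import Defs.
From mathcomp Require Import all_boot all_algebra.
From mathcomp Require Import reals complex.
Set Implicit Arguments. Unset Strict Implicit. Unset Printing Implicit Defensive.
Import GRing.Theory Num.Theory.
Local Open Scope ring_scope.

Section S.
Variable R : realType.
Local Arguments conjc : simpl never.

Definition ip (p q : P1 R) : R[i] :=
  conjc (qvec p).1 * (qvec q).1 + conjc (qvec p).2 * (qvec q).2.

Lemma ip_sig (p : P1 R) : ip p (sig p) = 0 /\ ip (sig p) p = 0.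
Proof.
case: p => [z|] /=; rewrite /ip /=.
  case: eqP => [->|/eqP z0] /=.
    by rewrite !rmorph0 rmorph1 !(mul0r, mulr0, mul1r, mulr1, addr0, add0r).
  rewrite !rmorph1 !mulr1 rmorphN fmorphV /= conjcK.
  have cz0 : conjc z != 0 by rewrite conjc_eq0.
  by rewrite mulrN mulfV // mulNr mulVf // addNr; split.
by rewrite !rmorph0 !rmorph1 !(mul0r, mulr0, mul1r, mulr1, addr0, add0r).
Qed.

Lemma hinnerE n (u v : pstate R n) :
  hinner u v = \prod_(k < n) ip (tnth u k) (tnth v k).
Proof.
rewrite /hinner.
have -> : \prod_(k < n) ip (tnth u k) (tnth v k) =
   \prod_(k < n) \sum_(x : bool) (if x then conjc (qvec (tnth u k)).2 * (qvec (tnth v k)).2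
        else conjc (qvec (tnth u k)).1 * (qvec (tnth v k)).1).
  by apply: eq_bigr => k _; rewrite /ip big_bool /= addrC.
rewrite bigA_distr_bigA /=.
apply: eq_bigr => b _.
rewrite /tens rmorph_prod -big_split /=.
apply: eq_bigr => k _.
by case: (b k).
Qed.

Lemma hinner0 n (u v : pstate R n) (k : 'I_n) :
  tnth u k = sig (tnth v k) \/ tnth v k = sig (tnth u k) -> hinner u v = 0.
Proof.
move=> H; rewrite hinnerE (bigD1 k) //=.
case: H => ->; have [h1 h2] := ip_sig (tnth v k); have [h3 h4] := ip_sig (tnth u k).
  by rewrite h2 mul0r.
by rewrite h3 mul0r.
Qed.
End S.

Section Main.
Variables (R : realType) (n : nat) (f : pstate R n -> R) (c : R).
Hypothesis hf : forall u : 'I_(2 ^ n) -> pstate R n,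
        UOB u -> \sum_(i < 2 ^ n) f (u i) = c.

Lemma card_sets : #|[set: {set 'I_n}]| = (2 ^ n)%N.
Proof. by rewrite -powersetT card_powerset cardsT card_ord. Qed.

Lemma cast_sum (T : finType) (A : {pred T}) m (e : #|A| = m) (F : T -> R) :
  \sum_(i < #|A|) F (enum_val i) = \sum_(i < m) F (enum_val (cast_ord (esym e) i)).
Proof. by case: m / e; apply: eq_bigr => i _; rewrite cast_ord_id. Qed.

Lemma sum_sets (v : {set 'I_n} -> pstate R n) :
  (forall M M', M != M' -> exists k,
     tnth (v M) k = sig (tnth (v M') k) \/ tnth (v M') k = sig (tnth (v M) k)) ->
  \sum_M f (v M) = c.
Proof.
move=> hv.
pose g (i : 'I_(2 ^ n)) := v (enum_val (cast_ord (esym card_sets) i)).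
have hg : UOB g.
  move=> i j ij.
  have [|k hk] := hv (enum_val (cast_ord (esym card_sets) i)) (enum_val (cast_ord (esym card_sets) j)).
    by apply: contra ij => /eqP /enum_val_inj /cast_ord_inj ->.
  exact: hinner0 hk.
rewrite -(hf hg) /g.
have -> : \sum_M f (v M) = \sum_(M in [set: {set 'I_n}]) f (v M).
  by apply: eq_bigl => M; rewrite inE.
rewrite big_enum_val; exact: (cast_sum card_sets (fun M => f (v M))).
Qed.

Lemma tnth_sigmaJ (L : {set 'I_n}) (u : pstate R n) i :
  tnth (sigmaJ L u) i = if i \in L then sig (tnth u i) else tnth u i.
Proof. by rewrite /sigmaJ tnth_mktuple. Qed.

Lemma diff_elt (M M' : {set 'I_n}) : M != M' -> exists k, (k \in M) != (k \in M').
Proof.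
move=> MM.
have /existsP [k hk] : [exists k, (k \in M) != (k \in M')].
  apply: contraR MM => /existsPn h; apply/eqP/setP => k.
  by move: (h k); rewrite negbK => /eqP.
by exists k.
Qed.

Lemma orth_diff (base : {set 'I_n} -> pstate R n) (M M' : {set 'I_n}) k :
  (k \in M) != (k \in M') -> tnth (base M) k = tnth (base M') k ->
  tnth (sigmaJ M (base M)) k = sig (tnth (sigmaJ M' (base M')) k) \/
  tnth (sigmaJ M' (base M')) k = sig (tnth (sigmaJ M (base M)) k).
Proof.
rewrite !tnth_sigmaJ => hk ->.
by case: (k \in M) (k \in M') hk => [] [] //= _; [left|right].
Qed.

Lemma full_sum (u : pstate R n) : \sum_M f (sigmaJ M u) = c.
Proof.
apply: (sum_sets (v := fun M => sigmaJ M u)) => M M' /diff_elt [k hk].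
by exists k; apply: (orth_diff (base := fun _ => u)).
Qed.

Definition SJ (J : {set 'I_n}) (x : pstate R n) :=
  \sum_(L : {set 'I_n} | L \subset J) f (sigmaJ L x).

Lemma key (J : {set 'I_n}) j (u w : pstate R n) : j \in J ->
  (forall i, i != j -> tnth u i = tnth w i) -> SJ J u = SJ J w.
Proof.
move=> jJ huw.
pose base (M : {set 'I_n}) := if M \subset J then w else u.
have hb : forall M i, i != j -> tnth (base M) i = tnth u i.
  by move=> M i ij; rewrite /base; case: ifP => // _; rewrite huw.
have hv : \sum_M f (sigmaJ M (base M)) = c.
  apply: (sum_sets (v := fun M => sigmaJ M (base M))) => M M' MM.
  have [eqJ|neJ] := boolP ((M \subset J) == (M' \subset J)).
    have [k hk] := diff_elt MM.
    exists k; apply: orth_diff => //.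
    by rewrite /base (eqP eqJ).
  have [i iM iJ] : exists2 i, (i \in M) != (i \in M') & i \notin J.
    case sM : (M \subset J) neJ; case sM' : (M' \subset J) => // _.
      move/negbT: sM' => /subsetPn [i iM' iJ]; exists i => //.
      by rewrite iM' eqb_id; apply/negP => hM; move: (subsetP sM i hM); rewrite (negbTE iJ).
    move/negbT: sM => /subsetPn [i iM iJ]; exists i => //.
    by rewrite iM eq_sym eqb_id; apply/negP => hM; move: (subsetP sM' i hM); rewrite (negbTE iJ).
  have ij : i != j by apply: contraNneq iJ => ->.
  by exists i; apply: orth_diff => //; rewrite !hb.
have hu := full_sum u.
rewrite (bigID (fun M : {set 'I_n} => M \subset J) xpredT) /= in hv.
rewrite (bigID (fun M : {set 'I_n} => M \subset J) xpredT) /= in hu.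
have e1 : \sum_(i : {set 'I_n} | i \subset J) f (sigmaJ i (base i)) = SJ J w.
  by apply: eq_bigr => M hM; rewrite /base hM.
have e2 : \sum_(i : {set 'I_n} | ~~ (i \subset J)) f (sigmaJ i (base i)) =
          \sum_(i : {set 'I_n} | ~~ (i \subset J)) f (sigmaJ i u).
  by apply: eq_bigr => M /negbTE hM; rewrite /base hM.
rewrite e1 e2 in hv.
rewrite /SJ; apply: (addIr (\sum_(i : {set 'I_n} | ~~ (i \subset J)) f (sigmaJ i u))).
by rewrite hu -hv.
Qed.

Lemma agree (J : {set 'I_n}) (u w : pstate R n) :
  (forall i, i \notin J -> tnth u i = tnth w i) -> SJ J u = SJ J w.
Proof.
move=> huw.
pose x k : pstate R n :=
  [tuple (if (i < k)%N && (i \in J) then tnth w i else tnth u i) | i < n].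
have step : forall k, SJ J (x k) = SJ J (x k.+1).
  move=> k.
  case: (ltnP k n) => hk.
    pose j := Ordinal hk.
    case jJ : (j \in J).
      apply: (key jJ) => i ij; rewrite !tnth_mktuple.
      have -> : (i < k.+1)%N = (i < k)%N.
        rewrite ltnS leq_eqVlt.
        have -> : (nat_of_ord i == k) = false.
          by apply/negbTE; apply: contra ij => /eqP e; apply/eqP/val_inj.
        by [].
      by [].
    suff -> : x k = x k.+1 by []; apply: eq_from_tnth => i; rewrite !tnth_mktuple [(i < k.+1)%N]ltnS [(i <= k)%N]leq_eqVlt.
    case: (eqVneq (nat_of_ord i) k) => [e|ne] //=.
    have -> : i = j by apply/val_inj.
    by rewrite jJ !andbF.
  suff -> : x k = x k.+1 by []; apply: eq_from_tnth => i; rewrite !tnth_mktuple.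
  have h1 : (i < k)%N by apply: leq_trans (ltn_ord i) hk.
  by rewrite h1 ltnS ltnW.
have hx : forall k, SJ J u = SJ J (x k).
  elim=> [|k IH].
    by suff -> : x 0 = u by []; apply: eq_from_tnth => i; rewrite tnth_mktuple.
  by rewrite IH step.
rewrite (hx n); suff -> : x n = w by []; apply: eq_from_tnth => i; rewrite tnth_mktuple ltn_ord /=.
by case: ifP => // /negbT /huw.
Qed.
End Main.

Theorem lemma1 (R : realType) (n : nat) (hn : (0 < n)%N)
    (f : pstate R n -> R) (c : R)
    (hf : forall u : 'I_(2 ^ n) -> pstate R n,
        UOB u -> \sum_(i < 2 ^ n) f (u i) = c) :
  forall J : {set 'I_n},
  exists phi : seq R[i] -> R,
    (J = setT -> phi [::] = c) /\
    forall z : n.-tuple R[i], (forall i, inF (tnth z i)) ->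
      \sum_(L : {set 'I_n} | L \subset J) f (sigmaJ L (pst z)) = phi (tauJ J z).
Proof.
move=> J.
pose z' (s : seq R[i]) : n.-tuple R[i] :=
  [tuple (if i \in J then 0 else nth 0 s (index i (enum (~: J)))) | i < n].
exists (fun s => SJ f J (pst (z' s))); split.
  move=> -> /=; rewrite /SJ -(full_sum hf (pst (z' [::]))).
  by apply: eq_bigl => L; rewrite subsetT.
move=> z _; rewrite -/(SJ f J (pst z)); apply: (agree hf) => i iJ.
rewrite /pst !tnth_map /z' tnth_ord_tuple (negbTE iJ) /tauJ.
have hi : i \in enum (~: J) by rewrite mem_enum inE.
rewrite (nth_map i) ?index_mem // nth_index //.
Qed.
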